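(* Let $d=1$. There is a constant $c_1$ depending only on the dimension such that for all $N\ge1$, $n\ge1$ and integers $0=i_0<i_1<\cdots<i_n\le N$, $$\sum_{x_1,\dots,x_n\in\mathbb{Z}}\ \prod_{k=1}^n p_0^2(i_k-i_{k-1},x_k-x_{k-1})\left(\sum_{x\in\mathbb{Z}}x^2p_0(N-i_n,x-x_n)\right)^2\le c_1^nN^2\prod_{k=1}^n(i_k-i_{k-1})^{-1/2},$$ where $x_0=0$.
   Context: $p_0(n,x)$ is the probability that simple random walk on $\mathbb{Z}$ started at $0$ is at $x$ at time $n$. *)

(* Defs.v *)
From HB Require Import structures.
From mathcomp Require Import all_boot all_order all_algebra.
From mathcomp Require Import all_classical all_reals all_analysis.
Set Implicit Arguments. Unset Strict Implicit. Unset Printing Implicit Defensive.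
Import Order.TTheory GRing.Theory Num.Theory.
Local Open Scope ring_scope.
Local Open Scope classical_set_scope.

Fixpoint p0 {R : realType} (n : nat) (x : int) : R :=
  match n with
  | 0 => if x == 0 then 1 else 0
  | m.+1 => (p0 m (x - 1) + p0 m (x + 1)) / 2
  end.

Definition second_moment {R : realType} (M : nat) (xn : int) : \bar R :=
  \esum_(x in [set: int]) ((x%:~R ^+ 2 * p0 M (x - xn) : R)%:E).

(* Iterated sum over x_k, ..., x_n in Z (m = number of remaining variables,
   k = n - m + 1 is the index of the next variable), with x_{k-1} = xprev. *)
Fixpoint nested_sum {R : realType} (i : nat -> nat) (N n : nat) (m : nat)
  (xprev : int) : \bar R :=
  match m with
  | 0 => (second_moment (N - i n) xprev * second_moment (N - i n) xprev)%E
  | m'.+1 =>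
      let k := (n - m')%N in
      \esum_(x in [set: int])
        (((p0 (i k - i k.-1) (x - xprev) : R) ^+ 2)%:E
         * @nested_sum R i N n m' x)%E
  end.

Definition lhs10 {R : realType} (i : nat -> nat) (N n : nat) : \bar R :=
  @nested_sum R i N n n 0.

(* Main.v *)
Require Import Defs.
From HB Require Import structures.
From mathcomp Require Import all_boot all_order all_algebra.
From mathcomp Require Import all_classical all_reals all_analysis.
From mathcomp Require Import zify ring lra.
Import Order.TTheory GRing.Theory Num.Theory.
Local Open Scope ring_scope.

Lemma cb_rec k : (k.+1 * 'C(k.*2.+2, k.+1) = 2 * k.*2.+1 * 'C(k.*2, k))%N.
Proof.
have h1 := mul_bin_diag k.*2.+2 k. have h2 := mul_bin_diag k.*2.+1 k.
rewrite /= in h1 h2.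
have e : (k.*2.+1 - k.+1 = k)%N by rewrite -addnn; lia.
have h4 : 'C(k.*2.+1, k) = 'C(k.*2.+1, k.+1).
  have := @bin_sub k.*2.+1 k.+1; rewrite e => ->//; lia.
rewrite -h1 h4 (_ : k.*2.+2 = 2 * k.+1)%N; last by rewrite -addnn; lia.
by rewrite -mulnA -h2 mulnA.
Qed.

Lemma cb_bound k : ('C(k.*2, k) ^ 2 * k.+1 <= 16 ^ k)%N.
Proof.
elim: k => [|k IH]; first by [].
have hr := cb_rec k.
set X := 'C(k.*2, k) in IH hr *. set Y := 'C(k.*2.+2, k.+1) in hr.
rewrite doubleS. fold Y.
have H1 : (k.+1 ^ 3 * (Y ^ 2 * k.+2) <= k.+1 ^ 3 * 16 ^ k.+1)%N.
  have -> : (k.+1 ^ 3 * (Y ^ 2 * k.+2) = (k.+1 * Y) ^ 2 * (k.+1 * k.+2))%N by ring.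
  rewrite hr.
  have -> : ((2 * k.*2.+1 * X) ^ 2 * (k.+1 * k.+2) = (4 * k.*2.+1 ^2 * k.+2) * (X ^ 2 * k.+1))%N by ring.
  apply: (leq_trans (leq_mul (leqnn _) IH)).
  rewrite (expnS 16 k).
  have h : (4 * k.*2.+1 ^ 2 * k.+2 <= 16 * k.+1 ^ 3)%N.
    rewrite (_ : 16 * k.+1 ^ 3 = 4 * k.*2.+1 ^ 2 * k.+2 + 4 * (3 * k + 2))%N ?leq_addr //.
    rewrite -mul2n; ring.
  rewrite mulnA (mulnC (k.+1 ^ 3)%N).
  exact: leq_mul h (leqnn (16 ^ k)).
by rewrite leq_pmul2l ?expn_gt0 in H1.
Qed.

Lemma bin_inc m j : (j.+1 <= m - j)%N -> ('C(m, j) <= 'C(m, j.+1))%N.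
Proof.
move=> h; have e := mul_bin_left m j.
rewrite -(@leq_pmul2l j.+1) // e; exact: leq_mul.
Qed.

Lemma half_facts m : (m./2 + m./2 <= m /\ m <= m./2 + m./2 + 1)%N.
Proof.
have := odd_double_half m; rewrite -addnn; case: (odd m) => /= h; lia.
Qed.

Lemma bin_le_half m j : ('C(m, j) <= 'C(m, m./2))%N.
Proof.
have [hm1 hm2] := half_facts m.
have low : forall d j, (j + d = m./2)%N -> ('C(m, j) <= 'C(m, m./2))%N.
  elim=> [|d IH] j' hj; first by rewrite -hj addn0.
  apply: leq_trans (IH j'.+1 _); last by lia.
  apply: bin_inc; lia.
case: (leqP j m./2) => hj; first by apply: (low (m./2 - j)%N); lia.
case: (leqP j m) => hjm; last by rewrite bin_small.
rewrite -bin_sub //; apply: (low (m./2 - (m - j))%N); lia.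
Qed.

Lemma binsq_bound m j : ('C(m, j) ^ 2 * m <= 2 * 4 ^ m)%N.
Proof.
apply: (@leq_trans ('C(m, m./2) ^ 2 * m)).
  by rewrite leq_mul2r leq_exp2r ?bin_le_half ?orbT.
have [k [-> | ->]] : exists k, m = k.*2 \/ m = k.*2.+1.
  exists m./2; have := odd_double_half m; case: (odd m) => /= h; [right|left];
  rewrite -addnn in h *; lia.
2: { have -> : (k.*2.+1)./2 = k by rewrite -[k.*2.+1]/(true + k.*2)%N half_bit_double.
  have hb := cb_bound k.+1; rewrite doubleS in hb.
  have h1 := mul_bin_diag k.*2.+2 k. rewrite /= in h1.
  set Y := 'C(k.*2.+2, k.+1) in h1 hb. set Z := 'C(k.*2.+1, k) in h1 *.
  have hY : Y = (2 * Z)%N.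
    apply/eqP; rewrite -(@eqn_pmul2l k.+1) // -h1; apply/eqP; rewrite -addnn; ring.
  rewrite hY in hb.
  rewrite (_ : 4 ^ k.*2.+1 = 4 * 16 ^ k)%N; last by rewrite expnS -mul2n expnM.
  rewrite (expnS 16 k) in hb.
  have : (4 * (Z ^ 2 * k.*2.+1) <= 4 * (2 * 4 * 16 ^ k))%N.
    apply: leq_trans (_ : 2 * ((2 * Z) ^ 2 * k.+2) <= _)%N.
      rewrite (_ : 2 * ((2 * Z) ^ 2 * k.+2) = 4 * (Z ^ 2 * (2 * k.+2)))%N; last by ring.
      rewrite leq_pmul2l // leq_mul2l; apply/orP; right; rewrite -addnn; lia.
    rewrite (_ : 4 * (2 * 4 * 16 ^ k) = 2 * (16 * 16 ^ k))%N; last by ring.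
    by rewrite leq_pmul2l.
  rewrite leq_pmul2l // => h; apply: leq_trans h _; rewrite -mulnA leq_pmul2l //.
  }
  rewrite doubleK.
  have hb := cb_bound k.
  rewrite (_ : 4 ^ k.*2 = 16 ^ k)%N; last by rewrite -mul2n expnM.
  apply: leq_trans (_ : 2 * ('C(k.*2, k) ^ 2 * k.+1) <= _)%N; last by rewrite leq_pmul2l.
  rewrite -mul2n (mulnC 2 k) mulnA mulnC leq_mul2l; apply/orP; right; lia.
Qed.

Section P.
Variable R : realType.

Lemma p0_ge0 m x : 0 <= p0 (R:=R) m x.
Proof.
elim: m x => [|m IH] x /=; first by case: ifP.
by rewrite divr_ge0 // addr_ge0.
Qed.

Definition T m (x : int) : R :=
  \sum_(0 <= j < m.+1) ((x == ((2 * j)%N : int) - (m : int))%:R * ('C(m, j))%:R).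

Lemma T_rec m x : T m.+1 x = T m (x - 1) + T m (x + 1).
Proof.
rewrite /T big_nat_recl // bin0.
under eq_bigr do rewrite binS natrD mulrDr.
rewrite big_split /= addrA [X in _ = X]addrC; congr (_ + _); last first.
  by apply: eq_bigr => i _; congr (_%:R * _); apply/eqP/eqP; lia.
rewrite [in RHS]big_nat_recl // bin0 [X in _ + X = _]big_nat_recr //= bin_small // mulr0 addr0.
congr (_ + _).
  by congr (_%:R * _); apply/eqP/eqP; lia.
by apply: eq_bigr => i _; congr (_%:R * _); apply/eqP/eqP; lia.
Qed.

Lemma p0_T m x : p0 (R:=R) m x = T m x / 2 ^+ m.
Proof.
elim: m x => [|m IH] x.
  by rewrite /T big_nat1 /= expr0 divr1 mulr1; case: (x == 0).
rewrite /= !IH T_rec exprS; field; by rewrite expf_neq0 ?pnatr_eq0.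
Qed.


Lemma T_cases m x : (exists j, T m x = ('C(m, j))%:R) \/ T m x = 0.
Proof.
rewrite /T big_mkord.
case: (boolP [exists j : 'I_m.+1, x == ((2 * j)%N : int) - (m : int)]).
  move=> /existsP [j0 hj0]; left; exists j0.
  rewrite (bigD1 j0) //= (eqP hj0) eqxx mul1r big1 ?addr0 // => j hj.
  case: eqP; rewrite ?mul0r // => e; exfalso.
  move: hj; rewrite -val_eqE /=; move/eqP; apply; lia.
rewrite negb_exists => /forallP h; right; apply: big1 => j _.
by rewrite (negbTE (h j)) mul0r.
Qed.

Lemma p0_sq_bound m x : (1 <= m)%N -> p0 (R:=R) m x ^+ 2 * m%:R <= 2.
Proof.
move=> hm; rewrite p0_T.
have h2 : (0 : R) < 2 ^+ m by rewrite exprn_gt0.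
case: (T_cases m x) => [[j ->]|->]; last by rewrite mul0r expr0n /= mul0r.
have := binsq_bound m j.
rewrite -(ler_nat R) !natrM !natrX => h.
rewrite expr_div_n -mulrA mulrC -mulrA ler_pdivrMl ?exprn_gt0 //.
rewrite -exprM mulnC exprM (_ : (2 : R) ^+ 2 = 4%:R); last by rewrite expr2 -natrM.
by rewrite (mulrC (4 ^+ m)) (_ : _ * _ ^+ 2 = 'C(m, j)%:R * 'C(m, j)%:R * m%:R) //; ring.
Qed.


Lemma p0_le m x : (1 <= m)%N -> p0 (R:=R) m x <= 2 * (m%:R `^ (- (1 / 2))).
Proof.
move=> hm; rewrite powRN div1r powR12_sqrt // .
have hs : 0 < Num.sqrt (m%:R : R) by rewrite sqrtr_gt0 ltr0n.
rewrite -[2 * _]/(2 / _) ler_pdivlMr //.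
have h := @p0_sq_bound m x hm.
have e : (p0 (R:=R) m x * Num.sqrt m%:R) ^+ 2 = p0 m x ^+ 2 * m%:R by rewrite exprMn sqr_sqrtr.
have h0 : 0 <= p0 (R:=R) m x * Num.sqrt (m%:R : R) by rewrite mulr_ge0 ?p0_ge0 ?sqrtr_ge0.
rewrite -e in h; nra.
Qed.

Local Open Scope ereal_scope.

Lemma Elemma (g : nat -> int -> R) :
  (forall b y, (0 <= g b y)%R) ->
  (forall b y, (g b (y + 1) + g b (y - 1) <= 2 * g b.+1 y)%R) ->
  forall D a c x, (0 <= c)%R ->
  \esum_(y in [set: int]) ((c * p0 D (y - x) * g a y)%R%:E) <= (c * g (a + D)%N x)%:E.
Proof.
move=> g0 gS; elim=> [|D IH] a c x c0.
  rewrite addn0 (eq_esum (b := fun y => if y \in [set x]%classic then (c * g a x)%:E else 0)).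
    by rewrite -esum_mkcond esum_set1 // lee_fin mulr_ge0.
  move=> y _ /=; rewrite in_set1 subr_eq0; case: eqP => [->|]; first by rewrite mulr1.
  by rewrite mulr0 mul0r.
rewrite (eq_esum (b := fun y => ((c / 2) * p0 D (y - (x + 1)) * g a y)%R%:E
                               + ((c / 2) * p0 D (y - (x - 1)) * g a y)%R%:E)); last first.
  move=> y _ /=; rewrite -EFinD; congr (_%:E).
  rewrite (_ : y - x - 1 = y - (x + 1))%R; last by ring.
  rewrite (_ : y - x + 1 = y - (x - 1))%R; last by ring.
  ring.
have c20 : (0 <= c / 2)%R by rewrite divr_ge0.
rewrite esumD; last 2 first.
- by move=> y _; rewrite lee_fin !mulr_ge0 ?p0_ge0.
- by move=> y _; rewrite lee_fin !mulr_ge0 ?p0_ge0.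
apply: le_trans (leeD (IH a _ (x + 1)%R c20) (IH a _ (x - 1)%R c20)) _.
rewrite -EFinD lee_fin addnS.
have := gS (a + D)%N x.
have := g0 (a + D)%N (x + 1)%R; have := g0 (a + D)%N (x - 1)%R.
nra.
Qed.


Definition Hf (b : nat) (y : int) : R :=
  ((y%:~R) ^+ 4 + 6 * b%:R * (y%:~R) ^+ 2 + 3 * b%:R ^+ 2)%R.
Definition Qf (b : nat) (y : int) : R := ((y%:~R) ^+ 2 + b%:R)%R.

Lemma Hf_ge0 b y : (0 <= Hf b y)%R.
Proof.
rewrite /Hf; set z : R := y%:~R; set B : R := b%:R.
have hB : (0 <= B)%R by [].
have hz : (0 <= z ^+ 2)%R by rewrite exprn_even_ge0.
rewrite (_ : z ^+ 4 = (z ^+ 2) ^+ 2)%R; last by rewrite -exprM.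
nra.
Qed.

Lemma Qf_ge0 b y : (0 <= Qf b y)%R.
Proof. by rewrite /Qf addr_ge0 // exprn_even_ge0. Qed.

Lemma Hf_step b y : (Hf b (y + 1) + Hf b (y - 1) <= 2 * Hf b.+1 y)%R.
Proof.
rewrite /Hf intrD intrB -[b.+1]addn1 natrD /=.
set z : R := y%:~R; set B : R := b%:R.
nra.
Qed.

Lemma Qf_step b y : (Qf b (y + 1) + Qf b (y - 1) <= 2 * Qf b.+1 y)%R.
Proof.
rewrite /Qf intrD intrB -[b.+1]addn1 natrD /=.
set z : R := y%:~R; set B : R := b%:R.
nra.
Qed.

Lemma sm_bound M xn : second_moment (R:=R) M xn <= (Qf M xn)%:E.
Proof.
have := @Elemma Qf Qf_ge0 Qf_step M 0 1%R xn ler01.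
rewrite add0n mul1r; apply: le_trans; apply: le_esum => y _.
by rewrite lee_fin mul1r /Qf addr0 mulrC.
Qed.

Lemma sm_ge0 M xn : 0 <= second_moment (R:=R) M xn.
Proof. by apply: esum_ge0 => y _; rewrite lee_fin mulr_ge0 ?p0_ge0 ?exprn_even_ge0. Qed.

Definition Kf (i : nat -> nat) (n m : nat) : R :=
  \prod_((n - m).+1 <= k < n.+1) (2 * (((i k - i k.-1)%N)%:R `^ (- (1 / 2))))%R.

Lemma Kf_ge0 i n m : (0 <= Kf i n m)%R.
Proof. by apply: prodr_ge0 => k _; rewrite mulr_ge0 ?powR_ge0. Qed.

Lemma main_claim (i : nat -> nat) N n :
  (forall k : nat, (k < n)%N -> (i k < i k.+1)%N) -> (i n <= N)%N ->
  forall m, (m <= n)%N -> forall x,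
  nested_sum (R:=R) i N n m x <= (Kf i n m * Hf (N - i (n - m))%N x)%:E.
Proof.
move=> hinc hN.
have mono : forall d k, (k + d = n)%N -> (i k <= i n)%N.
  elim=> [|d IH] k hk; first by rewrite -hk addn0.
  apply: leq_trans (ltnW (hinc k _)) (IH k.+1 _); lia.
elim=> [|m IH] hm x.
  rewrite /= /Kf subn0 big_geq // mul1r.
  have h1 := sm_bound (N - i n) x; have h0 := sm_ge0 (N - i n) x.
  apply: le_trans (lee_pmul h0 h0 h1 h1) _.
  rewrite -EFinM lee_fin /Qf /Hf.
  have : (0 <= (N - i n)%N%:R :> R)%R by [].
  have : (0 <= (x%:~R : R) ^+ 2)%R by rewrite exprn_even_ge0.
  set z : R := x%:~R; set B : R := (N - i n)%N%:R.
  rewrite (_ : z ^+ 4 = (z ^+ 2) ^+ 2)%R; last by rewrite -exprM.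
  nra.
set k := (n - m)%N.
have hk1 : (1 <= k)%N by rewrite /k; lia.
have hkn : (k <= n)%N by rewrite /k; lia.
have hik : (i k.-1 < i k)%N by have := hinc k.-1; rewrite prednK //; apply; lia.
have hkN : (i k <= N)%N by apply: leq_trans (mono (n - k)%N k _) hN; lia.
set D := (i k - i k.-1)%N.
have hD : (1 <= D)%N by rewrite /D; lia.
set r : R := (D%:R `^ (- (1 / 2)))%R.
have r0 : (0 <= r)%R by rewrite powR_ge0.
have IHm := IH (ltnW hm).
rewrite /= -/k -/D.
apply: (@le_trans _ _ (\esum_(y in [set: int])
   (((2 * r * Kf i n m) * p0 D (y - x) * Hf (N - i (n - m))%N y)%R%:E))).
  apply: le_esum => y _.
  apply: le_trans (lee_wpmul2l _ (IHm y)) _; first by rewrite lee_fin exprn_even_ge0.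
  rewrite -EFinM lee_fin.
  have hW : (0 <= p0 D (y - x) * (Kf i n m * Hf (N - i (n - m))%N y))%R.
    by rewrite !mulr_ge0 ?p0_ge0 ?Kf_ge0 ?Hf_ge0.
  have := ler_wpM2r hW (@p0_le D (y - x) hD); rewrite -/r => h.
  lra.
apply: le_trans (@Elemma Hf Hf_ge0 Hf_step _ _ _ _ _) _.
  by rewrite mulr_ge0 ?Kf_ge0 // mulr_ge0.
rewrite lee_fin -/k.
have -> : (N - i k + D = N - i (n - m.+1))%N by rewrite /D (_ : n - m.+1 = k.-1)%N; lia.
rewrite /Kf (_ : (n - m.+1).+1 = k)%N; last by rewrite /k; lia.
by rewrite (big_ltn (m := k)) // -/D -/r mulrA.
Qed.

End P.

Theorem lemma10 (R : realType) :
  exists c1 : R,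
  forall (N n : nat) (i : nat -> nat),
    (1 <= N)%N -> (1 <= n)%N ->
    i 0%N = 0%N ->
    (forall k : nat, (k < n)%N -> (i k < i k.+1)%N) ->
    (i n <= N)%N ->
    (lhs10 (R:=R) i N n <=
      ((c1 ^+ n) * (N%:R ^+ 2)
       * \prod_(1 <= k < n.+1) (((i k - i k.-1)%N)%:R `^ (- (1 / 2))))%:E)%E.
Proof.
exists 6 => N n i hN hn hi0 hinc hiN.
have h3 : (3 : R) <= 3 ^+ n.
  case: n hn {hinc hiN} => // n _; rewrite exprS -[X in X <= _]mulr1 ler_wpM2l // exprn_ege1 //; lra.
have := @main_claim R i N n hinc hiN n (leqnn n) 0.
rewrite /lhs10 subnn hi0 ?subn0 => h; apply: le_trans h _.
rewrite lee_fin /Kf subnn big_split /= prodr_const_nat subSS ?subn0.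
set P := \prod_(1 <= k < n.+1) _.
have P0 : 0 <= P by apply: prodr_ge0 => k _; rewrite powR_ge0.
rewrite /Hf (_ : (0%:~R : R) = 0) // !expr0n /= mulr0 !add0r.
have hA : 0 <= 2 ^+ n * P * N%:R ^+ 2 by rewrite !mulr_ge0 // exprn_ge0.
rewrite (_ : (6 : R) = 2 * 3) ?exprMn; last by rewrite -natrM.
rewrite (_ : 2 ^+ n * P * (3 * N%:R ^+ 2) = (2 ^+ n * P * N%:R ^+ 2) * 3); last by ring.
rewrite (_ : 2 ^+ n * 3 ^+ n * N%:R ^+ 2 * P = (2 ^+ n * P * N%:R ^+ 2) * 3 ^+ n); last by ring.
exact: ler_wpM2l.
Qed.
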